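(* If $G$ is a clique-uniform graph with respect to a clique partition $F$, with clique partition graph $P_G$, then $\mathcal E(\mathcal R_F)=\mathcal E(P_G)$.
   Context: All graphs are finite and simple, $V(G)=\{1,\dots,n\}$. A clique partition of $G$ is a set $F=\{C_1,\dots,C_k\}$ of cliques such that every edge lies in exactly one $C_j$; $G$ is clique-uniform if all $|C_j|$ are equal. $\mathcal M_F$ is the $n\times k$ $(0,1)$-matrix with $(i,j)$-entry $1$ iff $i\in C_j$, and $\mathcal R_F=\mathcal M_F^T\mathcal M_F$. The clique partition graph $P_G$ has vertex set $\{1,\dots,k\}$ with $i\neq j$ adjacent iff $C_i\cap C_j\neq\emptyset$. With $s_i^F=|C_i|$, $\mathcal E(\mathcal R_F)=\sum_{i=1}^k|\lambda_i(\mathcal R_F)-\frac1k\sum_{j=1}^k s_j^F|$, and $\mathcal E(P_G)=\sum_{i=1}^k|\lambda_i(P_G)|$ is the sum of absolute values of adjacency eigenvalues. *)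

(* Defs.v *)
From HB Require Import structures.
From mathcomp Require Import all_boot all_order all_algebra all_field.
Set Implicit Arguments. Unset Strict Implicit. Unset Printing Implicit Defensive.
Import Order.TTheory GRing.Theory Num.Theory.
Local Open Scope ring_scope.

(* A simple graph on V(G) = 'I_n (i.e. {1..n} shifted to {0..n-1}):
   a symmetric irreflexive relation. *)
Definition simple_graph (n : nat) (adj : rel 'I_n) : Prop :=
  irreflexive adj /\ symmetric adj.

Definition is_clique (n : nat) (adj : rel 'I_n) (C : {set 'I_n}) : Prop :=
  forall u v, u \in C -> v \in C -> u != v -> adj u v.

(* F = {C_1,...,C_k} given as an injective family C : 'I_k -> {set 'I_n}
   (injective because F is a *set* of cliques); every edge lies in exactly
   one C_j. *)
Definition clique_partition (n k : nat) (adj : rel 'I_n)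
  (C : 'I_k -> {set 'I_n}) : Prop :=
  injective C /\ (forall j, is_clique adj (C j)) /\
  (forall u v, adj u v -> exists! j, (u \in C j) && (v \in C j)).

Definition clique_uniform (n k : nat) (C : 'I_k -> {set 'I_n}) : Prop :=
  forall i j, #|C i| = #|C j|.

Definition incM (n k : nat) (C : 'I_k -> {set 'I_n}) : 'M[algC]_(n, k) :=
  \matrix_(i < n, j < k) (i \in C j)%:R.

Definition RF (n k : nat) (C : 'I_k -> {set 'I_n}) : 'M[algC]_k :=
  (incM C)^T *m incM C.

Definition PG_adj (n k : nat) (C : 'I_k -> {set 'I_n}) : 'M[algC]_k :=
  \matrix_(i < k, j < k) ((i != j) && (C i :&: C j != set0))%:R.

(* The eigenvalues of a square matrix, listed with algebraic multiplicity:
   a sequence rs with char_poly A = \prod_(r <- rs) ('X - r) (char_poly is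
   monic, so its leading coefficient is 1). *)
Definition eigenvalues (k : nat) (A : 'M[algC]_k) : seq algC :=
  sval (closed_field_poly_normal (char_poly A)).

Definition energyRF (n k : nat) (C : 'I_k -> {set 'I_n}) : algC :=
  \sum_(l <- eigenvalues (RF C))
     `| l - (k%:R)^-1 * \sum_(j < k) (#|C j|)%:R |.

Definition energyPG (n k : nat) (C : 'I_k -> {set 'I_n}) : algC :=
  \sum_(l <- eigenvalues (PG_adj C)) `| l |.

(* Main.v *)
Require Import Defs.
From mathcomp Require Import all_boot all_order all_algebra all_field.
Import Order.TTheory GRing.Theory Num.Theory.
Local Open Scope ring_scope.

Lemma eig_prod k (B : 'M[algC]_k) :
  char_poly B = \prod_(z <- eigenvalues B) ('X - z%:P).
Proof.
rewrite /eigenvalues; case: (closed_field_poly_normal _) => r /= Hr.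
by rewrite {1}Hr (monicP (char_poly_monic B)) scale1r.
Qed.

Lemma char_poly_shift k (A : 'M[algC]_k) m :
  char_poly (m%:M + A) = char_poly A \Po ('X - m%:P).
Proof.
rewrite /char_poly -det_map_mx; congr (\det _).
apply/matrixP => i j; rewrite !mxE.
rewrite rmorphB /= rmorphMn /= comp_polyX comp_polyC.
case: eqP => _ /=; rewrite ?mulr1n ?mulr0n; last by rewrite ?add0r ?subr0; idtac.
by rewrite polyCD opprD addrA.
Qed.

Lemma eig_shift k (A : 'M[algC]_k) m :
  perm_eq (eigenvalues (m%:M + A)) (map (fun l => l + m) (eigenvalues A)).
Proof.
apply: prod_XsubC_eq; rewrite -eig_prod char_poly_shift eig_prod rmorph_prod big_map.
apply: eq_bigr => z _; rewrite rmorphB /= comp_polyX comp_polyC polyCD opprD addrA.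
by rewrite addrAC.
Qed.

Lemma inter_le1 n k (adj : rel 'I_n) (C : 'I_k -> {set 'I_n}) i j :
  clique_partition adj C -> i != j -> (#|C i :&: C j| <= 1)%N.
Proof.
move=> [_ [cl uq]] ij; rewrite leqNgt; apply/negP => /card_gt1P [u [v [hu hv uv]]].
move: hu hv; rewrite !inE => /andP [ui uj] /andP [vi vj].
have a := cl i u v ui vi uv.
case: (uq u v a) => l [_ H].
apply: (negP ij); apply/eqP.
by rewrite -(H i) ?ui ?vi // -(H j) ?uj ?vj.
Qed.

Lemma RF_entry n k (C : 'I_k -> {set 'I_n}) i j :
  RF C i j = #|C i :&: C j|%:R.
Proof.
rewrite /RF !mxE.
rewrite (eq_bigr (fun l => (l \in C i :&: C j)%:R)); last first.
  by move=> l _; rewrite !mxE inE -natrM mulnb.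
rewrite -natr_sum -sum1_card; congr (_%:R).
rewrite [RHS]big_mkcond /=; apply: eq_bigr => l _; by case: (_ \in _).
Qed.

Theorem mainTheorem10 (n k : nat) (adj : rel 'I_n) (C : 'I_k -> {set 'I_n}) :
  simple_graph adj ->
  clique_partition adj C ->
  clique_uniform C ->
  energyRF C = energyPG C.
Proof.
move=> _ cp un.
set m := (k%:R)^-1 * \sum_(j < k) (#|C j|)%:R : algC.
have eR : RF C = m%:M + PG_adj C.
  apply/matrixP => i j; rewrite RF_entry !mxE.
  have km : m = #|C i|%:R.
    rewrite /m (eq_bigr (fun _ => #|C i|%:R)); last by move=> l _; rewrite (un l i).
    rewrite sumr_const card_ord -(mulr_natl (#|C i|%:R : algC) k) mulrA mulVf ?mul1r //.
    by rewrite pnatr_eq0 -lt0n (leq_ltn_trans (leq0n _) (ltn_ord i)).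
  case: (eqVneq i j) => [<-|ij]; first by rewrite setIid km /= mulr1n addr0.
  rewrite mulr0n add0r /=.
  have := @inter_le1 _ _ _ _ _ _ cp ij; rewrite -cards_eq0.
  by case: #|_| => [|[|]].
rewrite /energyRF /energyPG eR -/m (perm_big _ (eig_shift _ _ _)) big_map.
by apply: eq_bigr => l _; rewrite addrK.
Qed.
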